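(* Let $(\Omega,\mathcal F,\mathbb P)$ be a probability space, let $\mathfrak d,N\in\mathbb N$, let $\|\cdot\|$ be a norm on $\mathbb R^{\mathfrak d}$, let $\mathfrak H\subseteq\mathbb R^{\mathfrak d}$ be a set, let $\vartheta\in\mathfrak H$, $L,\varepsilon\in(0,\infty)$, let $\mathfrak E\colon\mathfrak H\times\Omega\to\mathbb R$ be $(\mathcal B(\mathfrak H)\otimes\mathcal F)/\mathcal B(\mathbb R)$-measurable with $|\mathfrak E(x,\omega)-\mathfrak E(y,\omega)|\le L\|x-y\|$ for all $x,y\in\mathfrak H$, $\omega\in\Omega$, and let $\Theta_n\colon\Omega\to\mathfrak H$, $n\in\{1,\dots,N\}$, be i.i.d. random variables. Then, writing $\mathfrak E(\Theta_n)$ for $\omega\mapsto\mathfrak E(\Theta_n(\omega),\omega)$ and $\mathfrak E(\vartheta)$ for $\omega\mapsto\mathfrak E(\vartheta,\omega)$, $$\mathbb P\Bigl(\bigl[\min_{n\in\{1,\dots,N\}}\mathfrak E(\Theta_n)\bigr]-\mathfrak E(\vartheta)>\varepsilon\Bigr)\le\Bigl[\mathbb P\bigl(\|\Theta_1-\vartheta\|>\tfrac{\varepsilon}L\bigr)\Bigr]^N\le\exp\Bigl(-N\,\mathbb P\bigl(\|\Theta_1-\vartheta\|\le\tfrac{\varepsilon}L\bigr)\Bigr).$$ *)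

(* Defs.v *)
From mathcomp Require Import all_boot all_algebra.
From mathcomp Require Import all_classical all_reals all_analysis.
Set Implicit Arguments.
Unset Strict Implicit.
Import GRing.Theory Num.Theory.
Local Open Scope ring_scope.
Local Open Scope classical_set_scope.

Definition is_norm (R : realType) (d : nat) (nrm : 'rV[R]_d -> R) : Prop :=
  [/\ (forall x, 0 <= nrm x),
      (forall x, nrm x = 0 -> x = 0),
      (forall (a : R) x, nrm (a *: x) = `|a| * nrm x) &
      (forall x y, nrm (x + y) <= nrm x + nrm y)].

Definition nrm_open (R : realType) (d : nat) (nrm : 'rV[R]_d -> R)
  (U : set 'rV[R]_d) : Prop :=
  forall x, U x -> exists2 r : R, 0 < r & forall y, nrm (y - x) < r -> U y.

Definition borel_rV (R : realType) (d : nat) (nrm : 'rV[R]_d -> R)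
  : set (set 'rV[R]_d) := <<s nrm_open nrm >>.

Definition prod_sigma (R : realType) (d : nat) (nrm : 'rV[R]_d -> R)
  (dT : measure_display) (T : measurableType dT) : set (set ('rV[R]_d * T)) :=
  <<s [set A `*` B | A in borel_rV nrm & B in [set B : set T | measurable B]] >>.

(* E : H x Omega -> R is (B(H) (x) F)/B(R)-measurable.  The sigma-algebra
   B(H) (x) F on H x Omega is the trace of B(R^d) (x) F on H x Omega. *)
Definition jointly_measurable_on (R : realType) (d : nat) (nrm : 'rV[R]_d -> R)
  (dT : measure_display) (T : measurableType dT) (H : set 'rV[R]_d)
  (E : 'rV[R]_d -> T -> R) : Prop :=
  forall U : set R, measurable U ->
    exists2 S, @prod_sigma R d nrm dT T S &
      [set p : 'rV[R]_d * T | H p.1 /\ U (E p.1 p.2)] = (H `*` setT) `&` S.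

Definition rv_in (R : realType) (d : nat) (nrm : 'rV[R]_d -> R)
  (dT : measure_display) (T : measurableType dT) (H : set 'rV[R]_d)
  (X : T -> 'rV[R]_d) : Prop :=
  (forall w, H (X w)) /\
  (forall A, borel_rV nrm A -> measurable (X @^-1` A)).

Definition iid_family (R : realType) (d : nat) (nrm : 'rV[R]_d -> R)
  (dT : measure_display) (T : measurableType dT) (P : probability T R)
  (N : nat) (Theta : nat -> T -> 'rV[R]_d) : Prop :=
  (forall n A, (1 <= n <= N)%N -> borel_rV nrm A ->
     P (Theta n @^-1` A) = P (Theta 1%N @^-1` A)) /\
  (forall A : nat -> set 'rV[R]_d, (forall n, (1 <= n <= N)%N -> borel_rV nrm (A n)) ->
     P [set w | forall n, (1 <= n <= N)%N -> A n (Theta n w)] =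
     (\prod_(1 <= n < N.+1) P (Theta n @^-1` A n))%E).

(* Main.v *)
Require Import Defs.
From mathcomp Require Import all_boot all_algebra.
From mathcomp Require Import all_classical all_reals all_analysis.
Import GRing.Theory Num.Theory.
Local Open Scope ring_scope.
Local Open Scope classical_set_scope.
From mathcomp Require Import lra.
Import order.Order.TTheory.

Lemma meas_pair (R : realType) (d : nat) (nrm : 'rV[R]_d -> R)
  (dT : measure_display) (T : measurableType dT) (X : T -> 'rV[R]_d) :
  (forall A, borel_rV nrm A -> measurable (X @^-1` A)) ->
  forall S, @prod_sigma R d nrm dT T S -> measurable ((fun w => (X w, w)) @^-1` S).
Proof.
move=> hX S; rewrite /prod_sigma.
apply: (@smallest_sub _ _ _ [set S | measurable ((fun w => (X w, w)) @^-1` S)]).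
- split => /=.
  + by rewrite preimage_set0.
  + move=> A mA; rewrite setTD -preimage_setC; exact: measurableC.
  + move=> A mA; rewrite preimage_bigcup; exact: bigcupT_measurable.
- move=> _ [A bA [B mB <-]] /=.
  have -> : (fun w => (X w, w)) @^-1` (A `*` B) = X @^-1` A `&` B by [].
  exact: measurableI (hX _ bA) mB.
Qed.

Lemma meas_E (R : realType) (d : nat) (nrm : 'rV[R]_d -> R)
  (dT : measure_display) (T : measurableType dT) (H : set 'rV[R]_d)
  (E : 'rV[R]_d -> T -> R) (X : T -> 'rV[R]_d) :
  jointly_measurable_on nrm H E ->
  (forall w, H (X w)) ->
  (forall A, borel_rV nrm A -> measurable (X @^-1` A)) ->
  measurable_fun setT (fun w => E (X w) w).
Proof.
move=> hE hH hX _ U mU; rewrite setTI.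
have [S pS eS] := hE U mU.
suff -> : (fun w => E (X w) w) @^-1` U = (fun w => (X w, w)) @^-1` S.
  exact: (@meas_pair _ _ nrm _ _ X hX S pS).
apply/seteqP; split => w /=.
- move=> Uw.
  have : [set p : 'rV[R]_d * T | H p.1 /\ U (E p.1 p.2)] (X w, w) by split; [exact: hH|].
  by rewrite eS => -[_].
- move=> Sw.
  have : ((H `*` setT) `&` S) (X w, w) by split; [split; [exact: hH|]|].
  by rewrite -eS => -[_].
Qed.

Lemma bigmin_meas (dT : measure_display) (T : measurableType dT) (R : realType)
  (f : nat -> T -> R) : (forall n, measurable_fun setT (f n)) ->
  forall m, measurable_fun setT (fun w => \big[Num.min/f 1%N w]_(1 <= n < m) f n w).
Proof.
move=> hf m; elim: (index_iota 1 m) => [|a s IH].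
  rewrite (_ : (fun w => _) = f 1%N) //; apply: funext => w; by rewrite big_nil.
rewrite (_ : (fun w => _) = (fun w => Num.min (f a w) (\big[Num.min/f 1%N w]_(n <- s) f n w))).
  exact: measurable_realfun.measurable_minr.
by apply: funext => w; rewrite big_cons.
Qed.

Lemma prode_const (R : realType) (x : \bar R) n : (\prod_(1 <= i < n.+1) x = x ^+ n)%E.
Proof.
elim: n => [|n IH]; first by rewrite big_geq.
by rewrite big_nat_recr // IH expeS muleC.
Qed.

Theorem lemma3p22 (R : realType) (dT : measure_display) (T : measurableType dT)
  (P : probability T R) (d N : nat) (nrm : 'rV[R]_d -> R)
  (H : set 'rV[R]_d) (theta : 'rV[R]_d) (L eps : R)
  (E : 'rV[R]_d -> T -> R) (Theta : nat -> T -> 'rV[R]_d) :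
  (0 < N)%N ->
  is_norm nrm ->
  H theta ->
  0 < L -> 0 < eps ->
  jointly_measurable_on nrm H E ->
  (forall x y w, H x -> H y -> `|E x w - E y w| <= L * nrm (x - y)) ->
  (forall n, (1 <= n <= N)%N -> rv_in nrm H (Theta n)) ->
  iid_family nrm P N Theta ->
  (P [set w | (\big[Num.min/E (Theta 1%N w) w]_(1 <= n < N.+1) E (Theta n w) w
                - E theta w > eps)%R]
     <= (P [set w | (nrm (Theta 1%N w - theta) > eps / L)%R]) ^+ N)%E /\
  ((P [set w | (nrm (Theta 1%N w - theta) > eps / L)%R]) ^+ N
     <= (expR (- N%:R * fine (P [set w | (nrm (Theta 1%N w - theta) <= eps / L)%R]))%R)%:E)%E.
Proof.
move=> N0 [n0 n1 nZ nD] Htheta L0 e0 hE hL hTh [iidD iidI].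
set A := [set x : 'rV[R]_d | eps / L < nrm (x - theta)].
have bA : borel_rV nrm A.
  apply: sub_gen_smallest => x /= Ax.
  exists (nrm (x - theta) - eps / L); first by rewrite subr_gt0.
  move=> y hy; rewrite /A /=.
  have h1 : nrm (x - theta) <= nrm (x - y) + nrm (y - theta).
    by have := nD (x - y) (y - theta); rewrite addrA subrK.
  have h2 : nrm (x - y) = nrm (y - x).
    by rewrite -[y - x]opprB -[- (x - y)]scaleN1r nZ normrN1 mul1r.
  lra.
have mTh n : (1 <= n <= N)%N -> measurable (Theta n @^-1` A).
  by move=> hn; exact: (hTh n hn).2 A bA.
have hN1 : (1 <= 1 <= N)%N by rewrite leqnn N0.
pose g n := if (1 <= n <= N)%N then (fun w => E (Theta n w) w) else (fun _ : T => 0 : R).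
have mg n : measurable_fun setT (g n).
  rewrite /g; case: ifP => hn; last exact: measurable_cst.
  exact: (@meas_E _ _ nrm _ _ H E (Theta n) hE (hTh n hn).1 (hTh n hn).2).
have mth : measurable_fun setT (fun w => E theta w).
  apply: (@meas_E _ _ nrm _ _ H E (fun _ => theta) hE (fun _ => Htheta)) => B _.
  case: (pselect (B theta)) => hB.
    rewrite (_ : _ @^-1` _ = setT) //; by apply/seteqP; split.
  rewrite (_ : _ @^-1` _ = set0) //; by apply/seteqP; split.
set Ev := [set w | _].
have mEv : measurable Ev.
  have eqm : (fun w => \big[Num.min/E (Theta 1%N w) w]_(1 <= n < N.+1) E (Theta n w) w)
     = (fun w => \big[Num.min/g 1%N w]_(1 <= n < N.+1) g n w).
    apply: funext => w; rewrite /g hN1; apply: eq_big_nat => n hn.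
    by rewrite -ltnS hn.
  have mm := @bigmin_meas _ _ _ g mg N.+1.
  rewrite -eqm in mm.
  have := measurable_realfun.measurable_funB mm mth measurableT (measurable_itv `]eps, +oo[%R).
  rewrite setTI; congr measurable; apply/seteqP; split => w /=; by rewrite in_itv /= andbT.
set B := [set w | forall n, (1 <= n <= N)%N -> A (Theta n w)].
have mB : measurable B.
  rewrite (_ : B = \bigcap_k (if (1 <= k <= N)%N then Theta k @^-1` A else setT)).
    apply: bigcapT_measurable => k; case: ifP => hk //; exact: mTh.
  apply/seteqP; split => w /=.
    by move=> h k _; case: ifP => hk //; exact: h.
  by move=> h n hn; have := h n I; rewrite hn.
have EvB : Ev `<=` B.
  move=> w /= hw n hn; rewrite /A /= ltNge; apply/negP => hle.
  have h1 : E (Theta n w) w - E theta w <= eps.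
    have := hL (Theta n w) theta w ((hTh n hn).1 w) Htheta.
    have := ler_wpM2l (ltW L0) hle.
    rewrite mulrCA divff ?mulr1 ?lt0r_neq0 // => h3 h4.
    exact: le_trans (ler_norm _) (le_trans h4 h3).
  have h2 : \big[Num.min/E (Theta 1%N w) w]_(1 <= n < N.+1) E (Theta n w) w <= E (Theta n w) w.
    case/andP: hn => hn1 hn2.
    apply: le_trans (le_bigmin_nat _ _ hn1 (_ : n.+1 <= N.+1)%N) _ => //.
    by rewrite /index_iota subSnn /= big_cons big_nil ge_min lexx.
  move: hw; rewrite /Ev /= => hw; lra.
have hp : (P Ev <= P B)%E by apply: le_measure => //; rewrite inE.
have PB : P B = (P (Theta 1%N @^-1` A) ^+ N)%E.
  rewrite /B (iidI (fun _ => A)) // -prode_const.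
  by apply: eq_big_nat => n hn; apply: iidD => //; rewrite -ltnS.
split; first by rewrite -PB.
have mA1 := mTh 1%N hN1.
rewrite (_ : [set w | nrm (Theta 1%N w - theta) <= eps / L] = ~` (Theta 1%N @^-1` A)); last first.
  apply/seteqP; split => w /=; rewrite /A /= leNgt; first by move/negP.
  by move/negP.
rewrite probability_setC //.
have hp0 : (0 <= P (Theta 1%N @^-1` A))%E by [].
have hp1 : (P (Theta 1%N @^-1` A) <= 1)%E by exact: probability_le1.
have pf : P (Theta 1%N @^-1` A) \is a fin_num.
  by rewrite ge0_fin_numE // (le_lt_trans hp1) // ltry.
rewrite -(fineK pf).
set r := fine _.
have r0 : 0 <= r by exact: fine_ge0.
have r1 : r <= 1 by rewrite -lee_fin fineK.
rewrite -EFinB /= -EFin_expe lee_fin.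
rewrite mulNr -mulrN opprB expRM_natl.
apply: lerXn2r; rewrite ?inE ?nnegrE ?expR_ge0 //.
by have := expR_ge1Dx (r - 1); rewrite addrC subrK.
Qed.
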